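(* Let $c=\Big(8\sum_{j=1}^\infty\log^2(1+1/j)\Big)^{1/2}$. For every positive integer $t$ and all positive integers $a_1,\dots,a_t$, \[ \sum_{i=1}^t\log(a_i+1)\le\frac{c}{2}\Bigg(\sum_{i=1}^t i\,a_i\Bigg)^{1/2}. \] Moreover the constant $c/2$ is best possible: for every $c'<c/2$ there exist $t\ge1$ and positive integers $a_1,\dots,a_t$ with $\sum_{i=1}^t\log(a_i+1)>c'\big(\sum_{i=1}^t i a_i\big)^{1/2}$. *)

(* Defs.v *)
From Stdlib Require Import Reals.
Open Scope R_scope.

(* sum_{i=1}^t f i  (empty sum is 0 for t = 0) *)
Definition sum1 (t : nat) (f : nat -> R) : R :=
  match t with
  | O => 0
  | S t' => sum_f_R0 (fun k => f (S k)) t'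
  end.

(* The series sum_{j>=1} log^2(1 + 1/j); its value S satisfies infinite_sum. *)
Definition log2_series_term (k : nat) : R := (ln (1 + / INR (S k))) ^ 2.

Definition lhs3 (t : nat) (a : nat -> nat) : R :=
  sum1 t (fun i => ln (INR (a i) + 1)).

Definition wsum3 (t : nat) (a : nat -> nat) : R :=
  sum1 t (fun i => INR i * INR (a i)).

(* Main.v *)
Require Import Defs.
From Stdlib Require Import Reals Lra Lia Psatz ZArith Arith.
Open Scope R_scope.

Lemma sum1_S n f : sum1 (S n) f = sum1 n f + f (S n).
Proof. destruct n; simpl; [ring | reflexivity]. Qed.

Lemma sum1_ext n f g : (forall i, (1 <= i <= n)%nat -> f i = g i) -> sum1 n f = sum1 n g.
Proof.
  induction n; intros H; [reflexivity|].
  rewrite !sum1_S. rewrite IHn by (intros; apply H; lia). rewrite H by lia. reflexivity.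
Qed.

Lemma sum1_plus n f g : sum1 n (fun i => f i + g i) = sum1 n f + sum1 n g.
Proof. induction n; [simpl; ring|]. rewrite !sum1_S, IHn; ring. Qed.

Lemma sum1_scal n c f : sum1 n (fun i => c * f i) = c * sum1 n f.
Proof. induction n; [simpl; ring|]. rewrite !sum1_S, IHn; ring. Qed.

Lemma sum1_const n c : sum1 n (fun _ => c) = INR n * c.
Proof. induction n; [simpl; ring|]. rewrite !sum1_S, IHn, S_INR; ring. Qed.

Lemma sum1_le n f g : (forall i, (1 <= i <= n)%nat -> f i <= g i) -> sum1 n f <= sum1 n g.
Proof.
  induction n; intros H; [simpl; lra|].
  rewrite !sum1_S. assert (sum1 n f <= sum1 n g) by (apply IHn; intros; apply H; lia).
  assert (f (S n) <= g (S n)) by (apply H; lia). lra.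
Qed.

Lemma sum1_fubini n m (f : nat -> nat -> R) :
  sum1 n (fun i => sum1 m (fun j => f i j)) = sum1 m (fun j => sum1 n (fun i => f i j)).
Proof.
  induction n.
  - simpl. rewrite sum1_const; ring.
  - rewrite sum1_S, IHn, <- sum1_plus. apply sum1_ext. intros; rewrite sum1_S; reflexivity.
Qed.

Lemma sum1_ind m k h :
  sum1 m (fun j => if Nat.leb j k then h j else 0) = sum1 (Nat.min k m) h.
Proof.
  induction m.
  - rewrite Nat.min_0_r. reflexivity.
  - rewrite sum1_S, IHm. destruct (Nat.leb_spec (S m) k).
    + rewrite (Nat.min_r k (S m)) by lia. rewrite (Nat.min_r k m) by lia. rewrite sum1_S; reflexivity.
    + rewrite (Nat.min_l k (S m)) by lia. rewrite (Nat.min_l k m) by lia. ring.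
Qed.

Lemma sum1_ind1 m k :
  sum1 m (fun j => if Nat.leb j k then 1 else 0) = INR (Nat.min k m).
Proof.
  pose proof (sum1_ind m k (fun _ => 1)) as H. cbv beta in H. rewrite H, sum1_const; ring.
Qed.

Lemma sum1_nat n : sum1 n INR = INR n * (INR n + 1) / 2.
Proof. induction n; [simpl; field|]. rewrite sum1_S, IHn, S_INR; field. Qed.

Definition ell (j : nat) : R := ln (1 + / INR j).

Lemma ln_le x y : 0 < x -> x <= y -> ln x <= ln y.
Proof.
  intros. destruct (Rle_lt_or_eq_dec _ _ H0). left; apply ln_increasing; auto. subst; lra.
Qed.

Lemma ell_pos j : (1 <= j)%nat -> 0 < ell j.
Proof.
  intros. unfold ell. rewrite <- ln_1. apply ln_increasing; [lra|].
  assert (0 < INR j) by (apply lt_0_INR; lia).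
  assert (0 < / INR j) by (apply Rinv_0_lt_compat; auto). lra.
Qed.

Lemma ell_le1 j : (1 <= j)%nat -> ell j <= 1.
Proof.
  intros. unfold ell. assert (1 <= INR j) by (apply (le_INR 1); lia).
  assert (/ INR j <= 1). { rewrite <- Rinv_1. apply Rinv_le_contravar; lra. }
  assert (0 < / INR j) by (apply Rinv_0_lt_compat; lra).
  apply Rle_trans with (ln (exp 1)); [| rewrite ln_exp; lra].
  apply ln_le; [lra|].
  pose proof (exp_ineq1 1 ltac:(lra)). lra.
Qed.

Lemma ell_mono k j : (1 <= k <= j)%nat -> ell j <= ell k.
Proof.
  intros. unfold ell. assert (1 <= INR k) by (apply (le_INR 1); lia).
  assert (INR k <= INR j) by (apply le_INR; lia).
  assert (/ INR j <= / INR k) by (apply Rinv_le_contravar; lra).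
  assert (0 < / INR j) by (apply Rinv_0_lt_compat; lra).
  apply ln_le; lra.
Qed.

Lemma tele a : sum1 a ell = ln (INR a + 1).
Proof.
  induction a.
  - simpl. rewrite Rplus_0_l, ln_1. reflexivity.
  - rewrite sum1_S, IHa, S_INR. unfold ell. rewrite S_INR.
    pose proof (pos_INR a).
    assert (0 < / (INR a + 1)) by (apply Rinv_0_lt_compat; lra).
    rewrite <- ln_mult by lra. f_equal. field. lra.
Qed.
Lemma fub_ind t (a : nat -> nat) M (g : nat -> nat -> R) :
  (forall i, (1 <= i <= t)%nat -> (a i <= M)%nat) ->
  sum1 t (fun i => sum1 (a i) (g i)) =
  sum1 M (fun j => sum1 t (fun i => if Nat.leb j (a i) then g i j else 0)).
Proof.
  intros H.
  transitivity (sum1 t (fun i => sum1 M (fun j => if Nat.leb j (a i) then g i j else 0))).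
  - apply sum1_ext. intros i Hi. rewrite sum1_ind. rewrite Nat.min_l by (apply H; exact Hi). reflexivity.
  - apply sum1_fubini.
Qed.

Definition cnt t (a : nat -> nat) j := sum1 t (fun i => if Nat.leb j (a i) then 1 else 0).

Lemma cnt_bounds t a j : 0 <= cnt t a j <= INR t.
Proof.
  unfold cnt. split.
  - apply Rle_trans with (sum1 t (fun _ => 0)); [rewrite sum1_const; lra|].
    apply sum1_le; intros; destruct (Nat.leb j (a i)); lra.
  - replace (INR t) with (sum1 t (fun _ => 1)) by (rewrite sum1_const; ring).
    apply sum1_le; intros; destruct (Nat.leb j (a i)); lra.
Qed.

Lemma lhs_cols t a M : (forall i, (1 <= i <= t)%nat -> (a i <= M)%nat) ->
  lhs3 t a = sum1 M (fun j => ell j * cnt t a j).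
Proof.
  intros H. unfold lhs3.
  rewrite (sum1_ext t _ (fun i => sum1 (a i) ((fun _ j => ell j) i))) by (intros; rewrite tele; reflexivity).
  rewrite (fub_ind t a M (fun _ j => ell j) H).
  apply sum1_ext; intros j Hj. unfold cnt. rewrite <- sum1_scal. apply sum1_ext; intros i Hi.
  destruct (Nat.leb j (a i)); ring.
Qed.

Lemma wsum_cols t a M : (forall i, (1 <= i <= t)%nat -> (a i <= M)%nat) ->
  wsum3 t a = sum1 M (fun j => sum1 t (fun i => if Nat.leb j (a i) then INR i else 0)).
Proof.
  intros H. unfold wsum3.
  rewrite (sum1_ext t _ (fun i => sum1 (a i) ((fun i (_ : nat) => INR i) i))) by (intros; rewrite sum1_const; ring).
  apply (fub_ind t a M (fun i _ => INR i) H).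
Qed.

Lemma sq_bound t a M : sum1 M (fun j => (cnt t a j)^2) <= 2 * wsum3 t a.
Proof.
  induction t.
  - unfold cnt, wsum3; simpl. rewrite (sum1_ext M _ (fun _ => 0)) by (intros; simpl; ring).
    rewrite sum1_const; lra.
  - set (b := a (S t)).
    assert (E : forall j, cnt (S t) a j = cnt t a j + (if Nat.leb j b then 1 else 0))
      by (intros; unfold cnt; rewrite sum1_S; reflexivity).
    rewrite (sum1_ext M _ (fun j => (cnt t a j)^2 + (2 * cnt t a j * (if Nat.leb j b then 1 else 0) + (if Nat.leb j b then 1 else 0)^2)))
      by (intros; rewrite E; ring).
    rewrite sum1_plus.
    assert (H2 : sum1 M (fun j => 2 * cnt t a j * (if Nat.leb j b then 1 else 0) + (if Nat.leb j b then 1 else 0)^2)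
              <= sum1 M (fun j => (2 * INR t + 1) * (if Nat.leb j b then 1 else 0))).
    { apply sum1_le; intros j _. pose proof (cnt_bounds t a j). destruct (Nat.leb j b); lra. }
    rewrite sum1_scal, sum1_ind1 in H2.
    assert (INR (Nat.min b M) <= INR b) by (apply le_INR; lia).
    unfold wsum3 in *. rewrite sum1_S. fold b. rewrite S_INR.
    pose proof (pos_INR t). pose proof (pos_INR b). nra.
Qed.

Lemma cs M f g : 0 < sum1 M (fun j => f j ^ 2) ->
  (sum1 M (fun j => f j * g j))^2 <= sum1 M (fun j => f j ^ 2) * sum1 M (fun j => g j ^ 2).
Proof.
  intros HA. set (A := sum1 M (fun j => f j ^ 2)) in *. set (B := sum1 M (fun j => f j * g j)).
  set (C := sum1 M (fun j => g j ^ 2)).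
  assert (H : forall x, 0 <= x^2 * A + (-2 * x) * B + C).
  { intros x. unfold A, B, C. rewrite <- !sum1_scal, <- !sum1_plus.
    apply Rle_trans with (sum1 M (fun _ => 0)); [rewrite sum1_const; lra|].
    apply sum1_le; intros. pose proof (pow2_ge_0 (x * f i - g i)). nra. }
  specialize (H (B / A)).
  assert (E : (B/A)^2 * A + (-2 * (B/A)) * B + C = C - B^2 / A) by (field; lra).
  rewrite E in H.
  assert (B^2 = A * (B^2/A)) by (field; lra).
  assert (0 <= B^2/A) by (apply Rmult_le_pos; [nra | left; apply Rinv_0_lt_compat; lra]).
  nra.
Qed.
Lemma partial_eq K : sum1 (S K) (fun j => ell j ^ 2) = sum_f_R0 log2_series_term K.
Proof. reflexivity. Qed.

Lemma partial_le Ssum M : infinite_sum log2_series_term Ssum -> sum1 M (fun j => ell j ^ 2) <= Ssum.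
Proof.
  intros HS. destruct M.
  - simpl. apply Rle_trans with (sum_f_R0 log2_series_term 0).
    + simpl. unfold log2_series_term. apply pow2_ge_0.
    + apply sum_incr; [exact HS|]. intros; apply pow2_ge_0.
  - rewrite partial_eq. apply sum_incr; [exact HS|]. intros; apply pow2_ge_0.
Qed.

Fixpoint mx (t : nat) (a : nat -> nat) : nat :=
  match t with O => O | S t' => Nat.max (mx t' a) (a (S t')) end.

Lemma mx_ge t a i : (1 <= i <= t)%nat -> (a i <= mx t a)%nat.
Proof.
  induction t; intros H; simpl. lia.
  destruct (Nat.eq_dec i (S t)). subst; lia. specialize (IHt ltac:(lia)); lia.
Qed.

Lemma part1 Ss : infinite_sum log2_series_term Ss ->
  forall (t : nat) (a : nat -> nat),
        (1 <= t)%nat ->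
        (forall i, (1 <= i <= t)%nat -> (1 <= a i)%nat) ->
        lhs3 t a <= sqrt (8 * Ss) / 2 * sqrt (wsum3 t a).
Proof.
  intros HS t a Ht Ha. set (M := mx t a).
  assert (HM : forall i, (1 <= i <= t)%nat -> (a i <= M)%nat) by (intros; apply mx_ge; auto).
  assert (M1 : (1 <= M)%nat) by (pose proof (Ha 1%nat ltac:(lia)); pose proof (HM 1%nat ltac:(lia)); lia).
  rewrite (lhs_cols t a M HM).
  set (L := sum1 M (fun j => ell j * cnt t a j)).
  set (Q := sum1 M (fun j => ell j ^ 2)).
  assert (HQ : 0 < Q).
  { unfold Q. destruct M as [|M']; [lia|]. rewrite sum1_S.
    assert (0 <= sum1 M' (fun j => ell j ^ 2)).
    { apply Rle_trans with (sum1 M' (fun _ => 0)); [rewrite sum1_const; lra|].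
      apply sum1_le; intros; apply pow2_ge_0. }
    pose proof (ell_pos (S M') ltac:(lia)). nra. }
  assert (HQS : Q <= Ss) by (apply partial_le; auto).
  pose proof (cs M ell (cnt t a) HQ) as HCS. fold L Q in HCS.
  pose proof (sq_bound t a M) as HP.
  set (P := sum1 M (fun j => cnt t a j ^ 2)) in *.
  assert (HP0 : 0 <= P).
  { apply Rle_trans with (sum1 M (fun _ => 0)); [rewrite sum1_const; lra|].
    apply sum1_le; intros; apply pow2_ge_0. }
  assert (HL0 : 0 <= L).
  { apply Rle_trans with (sum1 M (fun _ => 0)); [rewrite sum1_const; lra|].
    apply sum1_le; intros. pose proof (ell_pos i ltac:(lia)). pose proof (cnt_bounds t a i). nra. }
  set (W := wsum3 t a) in *.
  assert (HW : 0 <= W) by nra.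
  assert (h1 : sqrt (8*Ss) * sqrt (8*Ss) = 8*Ss) by (apply sqrt_sqrt; lra).
  assert (h2 : sqrt W * sqrt W = W) by (apply sqrt_sqrt; lra).
  pose proof (sqrt_pos (8*Ss)). pose proof (sqrt_pos W).
  set (R0 := sqrt (8 * Ss) / 2 * sqrt W).
  assert (HR : R0 * R0 = 2 * Ss * W).
  { unfold R0. replace (sqrt (8 * Ss) / 2 * sqrt W * (sqrt (8 * Ss) / 2 * sqrt W))
      with ((sqrt (8*Ss) * sqrt (8*Ss)) * (sqrt W * sqrt W) / 4) by field.
    rewrite h1, h2. field. }
  assert (HR0 : 0 <= R0) by (unfold R0; nra).
  assert (L^2 <= 2 * Ss * W) by nra.
  destruct (Rle_lt_dec L R0); auto. nra.
Qed.
Fixpoint cntn (m : nat) (p : nat -> bool) : nat :=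
  match m with O => O | S m' => (cntn m' p + (if p (S m') then 1 else 0))%nat end.

Lemma cntn_le m p : (cntn m p <= m)%nat.
Proof. induction m; simpl; [lia|]. destruct (p (S m)); lia. Qed.

Lemma cntn_seg m p :
  (forall j k, (1 <= k <= j)%nat -> (j <= m)%nat -> p j = true -> p k = true) ->
  forall j, (1 <= j <= m)%nat -> p j = Nat.leb j (cntn m p).
Proof.
  induction m; intros Hd j Hj; [lia|].
  assert (IH : forall j, (1 <= j <= m)%nat -> p j = Nat.leb j (cntn m p))
    by (apply IHm; intros; eapply Hd; eauto; lia).
  pose proof (cntn_le m p). simpl.
  destruct (p (S m)) eqn:E.
  - assert (Hall : forall k, (1 <= k <= S m)%nat -> p k = true) by (intros; eapply Hd; eauto; lia).
    assert (cntn m p = m).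
    { destruct m; [simpl; reflexivity|].
      pose proof (IH (S m) ltac:(lia)). rewrite Hall in H0 by lia.
      symmetry in H0. apply Nat.leb_le in H0. lia. }
    rewrite Hall by lia. symmetry. apply Nat.leb_le. lia.
  - destruct (Nat.eq_dec j (S m)).
    + subst. rewrite E. symmetry. apply Nat.leb_gt. lia.
    + rewrite IH by lia. f_equal. lia.
Qed.

Lemma up_mono x y : x <= y -> (up x <= up y)%Z.
Proof.
  intros H. destruct (archimed x) as [h1 h2]. destruct (archimed y) as [h3 h4].
  destruct (Z_le_gt_dec (up x) (up y)); auto.
  assert (up y <= up x - 1)%Z by lia. apply IZR_le in H0. rewrite minus_IZR in H0. lra.
Qed.

Definition nf (N : nat) (j : nat) : nat := Z.to_nat (up (INR N * ell j)).

Lemma nf_bounds N j : (1 <= j)%nat ->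
  INR N * ell j < INR (nf N j) <= INR N * ell j + 1.
Proof.
  intros Hj. unfold nf. pose proof (ell_pos j Hj). pose proof (pos_INR N).
  destruct (archimed (INR N * ell j)) as [h1 h2].
  assert (0 <= up (INR N * ell j))%Z.
  { apply le_IZR. nra. }
  rewrite (INR_IZR_INZ (Z.to_nat _)), Z2Nat.id by lia. lra.
Qed.

Lemma nf_mono N k j : (1 <= k <= j)%nat -> (nf N j <= nf N k)%nat.
Proof.
  intros H. unfold nf. pose proof (ell_mono k j H). pose proof (pos_INR N).
  assert (INR N * ell j <= INR N * ell k) by nra.
  pose proof (up_mono _ _ H2). lia.
Qed.
Lemma part2 Ss c' : infinite_sum log2_series_term Ss -> c' < sqrt (8 * Ss) / 2 ->
  exists (t : nat) (a : nat -> nat),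
    (1 <= t)%nat /\ (forall i, (1 <= i <= t)%nat -> (1 <= a i)%nat) /\
    lhs3 t a > c' * sqrt (wsum3 t a).
Proof.
  intros HS Hc.
  destruct (Rle_lt_dec c' 0) as [Hneg|Hpos].
  { exists 1%nat, (fun _ => 1%nat). split; [lia|]. split; [intros; lia|].
    unfold lhs3. rewrite sum1_S. replace (sum1 0 _) with 0 by reflexivity. change (INR 1) with 1.
    pose proof (sqrt_pos (wsum3 1 (fun _ => 1%nat))).
    assert (0 < ln (1 + 1)) by (rewrite <- ln_1; apply ln_increasing; lra).
    nra. }
  assert (Hc2 : c'^2 < 2 * Ss).
  { destruct (Rle_lt_dec (8*Ss) 0) as [h|h].
    - rewrite sqrt_neg_0 in Hc by lra. lra.
    - assert (sqrt (8*Ss) * sqrt (8*Ss) = 8*Ss) by (apply sqrt_sqrt; lra).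
      pose proof (sqrt_pos (8*Ss)). nra. }
  destruct (HS (Ss - c'^2/2) ltac:(lra)) as [K HK].
  specialize (HK K (le_n K)). unfold Rdist in HK. apply Rabs_def2 in HK.
  rewrite <- partial_eq in HK.
  set (M := S K) in *.
  set (Q := sum1 M (fun j => ell j ^ 2)) in *.
  assert (HQ : c'^2/2 < Q) by lra.
  assert (HQ0 : 0 < Q) by nra.
  set (D := Q * (2*Q - c'^2)).
  assert (HD : 0 < D) by (unfold D; nra).
  destruct (INR_unbounded (5 * c'^2 * INR M / D)) as [N0 HN0].
  set (NN := S N0).
  assert (HN1 : 1 <= INR NN) by (unfold NN; rewrite S_INR; pose proof (pos_INR N0); lra).
  assert (HND : INR NN * D > 5 * c'^2 * INR M).
  { unfold NN. rewrite S_INR.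
    assert (5 * c'^2 * INR M = (5 * c'^2 * INR M / D) * D) by (field; lra).
    rewrite H. pose proof (pos_INR N0). nra. }
  set (n := nf NN).
  set (T := n 1%nat).
  set (a := fun i => cntn M (fun j => Nat.leb i (n j))).
  assert (Heq : forall i j, (1 <= j <= M)%nat -> Nat.leb j (a i) = Nat.leb i (n j)).
  { intros i j Hj. symmetry. unfold a.
    apply (cntn_seg M (fun j => Nat.leb i (n j))); auto.
    intros j0 k Hk Hj0 Hp. apply Nat.leb_le in Hp; apply Nat.leb_le.
    pose proof (nf_mono NN k j0 Hk). unfold n in *. lia. }
  assert (HaM : forall i, (1 <= i <= T)%nat -> (a i <= M)%nat) by (intros; apply cntn_le).
  assert (HT : (1 <= T)%nat).
  { pose proof (nf_bounds NN 1 (le_n 1)). pose proof (ell_pos 1 (le_n 1)).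
    assert (INR 0 < INR T) by (unfold T, n; simpl INR at 1; nra).
    apply INR_lt in H1. lia. }
  assert (HnT : forall j, (1 <= j)%nat -> (n j <= T)%nat) by (intros; apply nf_mono; lia).
  assert (M1 : (1 <= M)%nat) by (unfold M; lia).
  exists T, a. split; [exact HT|]. split.
  { intros i Hi. pose proof (Heq i 1%nat ltac:(lia)).
    assert (Nat.leb i (n 1%nat) = true) by (apply Nat.leb_le; unfold T in Hi; lia).
    rewrite H0 in H. apply Nat.leb_le in H. lia. }
  assert (HL : lhs3 T a = sum1 M (fun j => ell j * INR (n j))).
  { rewrite (lhs_cols T a M HaM). apply sum1_ext; intros j Hj. f_equal.
    unfold cnt. rewrite (sum1_ext T _ (fun i => if Nat.leb i (n j) then 1 else 0))
      by (intros; rewrite Heq; auto).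
    rewrite sum1_ind1, Nat.min_l by (apply HnT; lia). reflexivity. }
  assert (HW : wsum3 T a = sum1 M (fun j => INR (n j) * (INR (n j) + 1) / 2)).
  { rewrite (wsum_cols T a M HaM). apply sum1_ext; intros j Hj.
    rewrite (sum1_ext T _ (fun i => if Nat.leb i (n j) then INR i else 0))
      by (intros; rewrite Heq; auto).
    rewrite sum1_ind, Nat.min_l by (apply HnT; lia). apply sum1_nat. }
  rewrite HL, HW.
  set (L := sum1 M (fun j => ell j * INR (n j))).
  set (W := sum1 M (fun j => INR (n j) * (INR (n j) + 1) / 2)).
  assert (HLb : INR NN * Q <= L).
  { unfold Q, L. rewrite <- sum1_scal. apply sum1_le; intros j Hj.
    pose proof (nf_bounds NN j ltac:(lia)). pose proof (ell_pos j ltac:(lia)).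
    fold n in H. nra. }
  assert (HWb : W <= INR NN ^ 2 / 2 * Q + INR M * (5 * INR NN / 2)).
  { unfold Q, W. rewrite <- sum1_scal, <- sum1_const, <- sum1_plus.
    apply sum1_le; intros j Hj.
    pose proof (nf_bounds NN j ltac:(lia)). pose proof (ell_pos j ltac:(lia)).
    pose proof (ell_le1 j ltac:(lia)). fold n in H. pose proof (pos_INR (n j)).
    pose proof (pos_INR NN).
    set (x := INR (n j)) in *. set (l := ell j) in *.
    assert (0 <= INR NN * l) by nra.
    assert (0 <= (INR NN*l+1 - x)*(INR NN*l+2+x)) by (apply Rmult_le_pos; lra).
    assert (x * (x + 1) <= (INR NN * l + 1) * (INR NN * l + 2)) by nra.
    assert (INR NN * l <= INR NN) by nra.
    nra. }
  assert (HW0 : 0 <= W).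
  { apply Rle_trans with (sum1 M (fun _ => 0)); [rewrite sum1_const; lra|].
    apply sum1_le; intros. pose proof (pos_INR (n i)). nra. }
  assert (HL0 : 0 < L) by nra.
  assert (Hkey : c'^2 * W < L^2).
  { assert (c'^2 * W <= c'^2 * (INR NN ^ 2 / 2 * Q + INR M * (5 * INR NN / 2))) by nra.
    assert (0 <= INR NN * Q) by nra.
    assert ((INR NN * Q)^2 <= L^2) by (apply pow_incr; lra).
    assert (INR NN^2 * Q^2 = (INR NN * Q)^2) by ring.
    assert (INR NN ^2 * Q^2 - c'^2 * (INR NN ^ 2 / 2 * Q + INR M * (5 * INR NN / 2))
            = INR NN / 2 * (INR NN * D - 5 * c'^2 * INR M)) by (unfold D; field).
    assert (0 < INR NN / 2 * (INR NN * D - 5 * c'^2 * INR M)) by nra.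
    lra. }
  assert (h2 : sqrt W * sqrt W = W) by (apply sqrt_sqrt; lra).
  pose proof (sqrt_pos W).
  destruct (Rle_lt_dec L (c' * sqrt W)); [|lra].
  assert (L * L <= (c' * sqrt W) * (c' * sqrt W)) by nra.
  nra.
Qed.

Theorem lemma3p3 :
  forall Ssum : R,
    infinite_sum log2_series_term Ssum ->
    let c := sqrt (8 * Ssum) in
    (forall (t : nat) (a : nat -> nat),
        (1 <= t)%nat ->
        (forall i, (1 <= i <= t)%nat -> (1 <= a i)%nat) ->
        lhs3 t a <= c / 2 * sqrt (wsum3 t a))
    /\
    (forall c' : R, c' < c / 2 ->
        exists (t : nat) (a : nat -> nat),
          (1 <= t)%nat /\
          (forall i, (1 <= i <= t)%nat -> (1 <= a i)%nat) /\
          lhs3 t a > c' * sqrt (wsum3 t a)).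
Proof.
  intros Ssum HS c. split.
  - intros; apply (part1 Ssum); auto.
  - intros; apply (part2 Ssum); auto.
Qed.
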